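(* Let $n,m,v\ge1$ and let $S(n,m,v)$ be a memory system satisfying Processor Symmetry and Location Symmetry. Let $\Omega$ be a simple witness for $S(n,m,v)$ and let $\tau$ be an unambiguous trace of $S(n,m,v)$. If the graph $G(\Omega)(\tau)$ has a $k$-nice cycle, then there is an unambiguous trace $\tau''$ of $S(n,m,v)$ such that $G(\Omega)(\tau'')$ has a canonical $k$-nice cycle.
   Context: $\mathbb{N}_n=\{1,\dots,n\}$, $\mathbb{W}_v=\{0,\dots,v\}$. Memory events $E(n,m,v)=\{R,W\}\times\mathbb{N}_n\times\mathbb{N}_m\times\mathbb{W}_v$; for $e=\langle a,b,c,d\rangle$, $op(e)=a$, $proc(e)=b$, $loc(e)=c$, $data(e)=d$; $0$ models the initial value of every location. A memory system $S(n,m,v)$ is a regular set of finite runs over an alphabet containing $E(n,m,v)$ (other letters being internal events); a trace is the subsequence of memory events of a run. For a sequence $\tau$ of memory events with positions $1,\dots,|\tau|$: $P(\tau,i)=\{k: proc(\tau(k))=i\}$, $L(\tau,j)=\{k: loc(\tau(k))=j\}$, $L^w(\tau,j)=\{k\in L(\tau,j): op(\tau(k))=W\}$, $M(\tau,i)=\{\langle u,v\rangle: u,v\in P(\tau,i), u<v\}$. A trace $\tau$ is unambiguous if for every location $j$ and $x\in L^w(\tau,j)$, $data(\tau(x))\ne0$ and $data(\tau(x))\ne data(\tau(y))$ for all $y\in L^w(\tau,j)\setminus\{x\}$. Symmetry: for a permutation $\lambda$ of $\mathbb{N}_n$, $\lambda^p(\langle a,b,c,d\rangle)=\langle a,\lambda(b),c,d\rangle$;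 for a permutation $\lambda$ of $\mathbb{N}_m$, $\lambda^l(\langle a,b,c,d\rangle)=\langle a,b,\lambda(c),d\rangle$; both extended letterwise to sequences. Processor Symmetry: for every permutation $\lambda$ of $\mathbb{N}_n$ and every trace $\tau$ of $S(n,m,v)$, $\lambda^p(\tau)$ is a trace of $S(n,m,v)$. Location Symmetry: for every permutation $\lambda$ of $\mathbb{N}_m$ and every trace $\tau$ of $S(n,m,v)$, $\lambda^l(\tau)$ is a trace of $S(n,m,v)$. A witness $\Omega$ assigns to each trace $\tau$ and location $j$ a strict total order $\Omega(\tau,j)$ on $L^w(\tau,j)$; it is simple if $\langle x,y\rangle\in\Omega(\tau,j)$ iff $x<y$. For unambiguous $\tau$, $\Omega^e(\tau,j)\subseteq L(\tau,j)^2$: $\langle x,y\rangle\in\Omega^e(\tau,j)$ iff (1) $data(\tau(x))=data(\tau(y))$, $op(\tau(x))=W$, $op(\tau(y))=R$; or (2) $data(\tau(x))=0$ and $data(\tau(y))\ne0$; or (3) there are $a,b\in L^w(\tau,j)$ with $\langle a,b\rangle\in\Omega(\tau,j)$, $data(\tau(a))=data(\tau(x))$, $data(\tau(b))=data(\tau(y))$. $G(\Omega)(\tau)$ is the directed graph on $\{1,\dots,|\tau|\}$ with edge set $\bigcup_{i}M(\tau,i)\cup\bigcup_{j}\Omega^e(\tau,j)$. For $k\ge1$, $\oplus$ is addition in the cyclic group on $\mathbb{N}_k$ with identity $k$ ($x\oplus1=x+1$ for $x<k$, $k\oplus1=1$). A $k$-nice cycle in $G(\Omega)(\tau)$ is a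 sequence $u_1,v_1,\dots,u_k,v_k$ of pairwise distinct vertices such that: (i) for every $x$, $\langle u_x,v_x\rangle\in M(\tau,i)$ for some processor $i$ and $\langle v_x,u_{x\oplus1}\rangle\in\Omega^e(\tau,j)$ for some location $j$; (ii) the processors $i$ for distinct $x$ are distinct; (iii) the locations $j$ for distinct $x$ are distinct. A $k$-nice cycle is canonical if $\langle u_x,v_x\rangle\in M(\tau,x)$ and $\langle v_x,u_{x\oplus1}\rangle\in\Omega^e(\tau,x\oplus1)$ for all $1\le x\le k$. *)

(* Defs.v *)
From mathcomp Require Import all_boot fingroup perm.

Set Implicit Arguments.
Unset Strict Implicit.
Unset Printing Implicit Defensive.

Inductive opkind := Rd | Wr.

(* An event <a,b,c,d> with a in {R,W}, b in N_n, c in N_m, d in W_v.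
   Processor b = 1 + eproc, location c = 1 + eloc, data d = edata. *)
Record mev (n m v : nat) := MEv {
  eop : opkind; eproc : 'I_n; eloc : 'I_m; edata : 'I_v.+1 }.

Section Events.
Variables n m v : nat.
Definition op (e : mev n m v) : opkind := eop e.
Definition proc (e : mev n m v) : nat := (nat_of_ord (eproc e)).+1.
Definition loc (e : mev n m v) : nat := (nat_of_ord (eloc e)).+1.
Definition data (e : mev n m v) : nat := nat_of_ord (edata e).

Definition perm_p (lam : {perm 'I_n}) (e : mev n m v) : mev n m v :=
  MEv (eop e) (lam (eproc e)) (eloc e) (edata e).
Definition perm_l (lam : {perm 'I_m}) (e : mev n m v) : mev n m v :=
  MEv (eop e) (eproc e) (lam (eloc e)) (edata e).
End Events.

Definition regular (A : Type) (L : seq A -> Prop) : Prop :=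
  exists (Q : finType) (q0 : Q) (d : Q -> A -> Q) (F : pred Q),
    forall s, L s <-> F (foldl d q0 s).

(* Runs are over the alphabet E(n,m,v) + I (I = internal events). *)
Definition trace_of (n m v : nat) (I : Type) (r : seq (mev n m v + I))
  : seq (mev n m v) :=
  pmap (fun a => match a with inl e => Some e | inr _ => None end) r.

Definition is_trace (n m v : nat) (I : Type) (S : seq (mev n m v + I) -> Prop)
  (tau : seq (mev n m v)) : Prop :=
  exists r, S r /\ trace_of r = tau.

Definition processor_symmetry (n m v : nat) (I : Type)
  (S : seq (mev n m v + I) -> Prop) : Prop :=
  forall (lam : {perm 'I_n}) tau, is_trace S tau -> is_trace S (map (perm_p lam) tau).

Definition location_symmetry (n m v : nat) (I : Type)
  (S : seq (mev n m v + I) -> Prop) : Prop :=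
  forall (lam : {perm 'I_m}) tau, is_trace S tau -> is_trace S (map (perm_l lam) tau).

(* Positions are represented 0-based as 'I_(size tau) (position k+1 of the paper). *)
Definition pos (T : Type) (tau : seq T) := 'I_(size tau).
Definition at_ (T : Type) (tau : seq T) (k : pos tau) : T := tnth (in_tuple tau) k.
Arguments at_ {T tau} k.

Section Trace.
Variables n m v : nat.
Variable tau : seq (mev n m v).

Definition Pset (i : nat) (k : pos tau) : Prop := proc (at_ k) = i.
Definition Lset (j : nat) (k : pos tau) : Prop := loc (at_ k) = j.
Definition Lwset (j : nat) (k : pos tau) : Prop := Lset j k /\ op (at_ k) = Wr.
Definition Mrel (i : nat) (u w : pos tau) : Prop := Pset i u /\ Pset i w /\ u < w.

Definition unambiguous : Prop :=
  forall j (x : pos tau), Lwset j x ->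
    data (at_ x) <> 0 /\
    forall y : pos tau, Lwset j y -> y <> x -> data (at_ x) <> data (at_ y).
End Trace.
Arguments Pset {n m v} tau i k.
Arguments Lset {n m v} tau j k.
Arguments Lwset {n m v} tau j k.
Arguments Mrel {n m v} tau i u w.
Arguments unambiguous {n m v} tau.

Definition witness_fun (n m v : nat) :=
  forall tau : seq (mev n m v), nat -> pos tau -> pos tau -> Prop.

Definition is_witness (n m v : nat) (I : Type) (S : seq (mev n m v + I) -> Prop)
  (Om : witness_fun n m v) : Prop :=
  forall tau, is_trace S tau -> forall j : nat,
    (forall x y, Om tau j x y -> Lwset tau j x /\ Lwset tau j y) /\
    (forall x, ~ Om tau j x x) /\
    (forall x y z, Om tau j x y -> Om tau j y z -> Om tau j x z) /\
    (forall x y, Lwset tau j x -> Lwset tau j y -> x <> y ->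
        Om tau j x y \/ Om tau j y x).

Definition simple_witness (n m v : nat) (I : Type) (S : seq (mev n m v + I) -> Prop)
  (Om : witness_fun n m v) : Prop :=
  forall tau, is_trace S tau -> forall (j : nat) (x y : pos tau),
    Om tau j x y <-> (Lwset tau j x /\ Lwset tau j y /\ x < y).

Definition Omega_e (n m v : nat) (Om : witness_fun n m v) (tau : seq (mev n m v))
  (j : nat) (x y : pos tau) : Prop :=
  Lset tau j x /\ Lset tau j y /\
  [\/ data (at_ x) = data (at_ y) /\ op (at_ x) = Wr /\ op (at_ y) = Rd,
      data (at_ x) = 0 /\ data (at_ y) <> 0
    | exists a b : pos tau, [/\ Lwset tau j a, Lwset tau j b, Om tau j a b,
                               data (at_ a) = data (at_ x) & data (at_ b) = data (at_ y)]].

Arguments Omega_e {n m v} Om tau j x y.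

Definition Gedge (n m v : nat) (Om : witness_fun n m v) (tau : seq (mev n m v))
  (x y : pos tau) : Prop :=
  (exists i, Mrel tau i x y) \/ (exists j, Omega_e Om tau j x y).

Arguments Gedge {n m v} Om tau x y.

Definition oplus1 (k x : nat) : nat := if x < k then x.+1 else 1.

Definition cyc_distinct (T : Type) (k : nat) (u w : nat -> T) : Prop :=
  (forall x y, 1 <= x <= k -> 1 <= y <= k -> x <> y -> u x <> u y /\ w x <> w y) /\
  (forall x y, 1 <= x <= k -> 1 <= y <= k -> u x <> w y).

Definition nice_cycle (n m v : nat) (Om : witness_fun n m v) (tau : seq (mev n m v))
  (k : nat) : Prop :=
  exists (u w : nat -> pos tau) (p l : nat -> nat),
    [/\ cyc_distinct k u w,
        (forall x, 1 <= x <= k ->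
           Mrel tau (p x) (u x) (w x) /\ Omega_e Om tau (l x) (w x) (u (oplus1 k x))),
        (forall x y, 1 <= x <= k -> 1 <= y <= k -> x <> y -> p x <> p y)
      & (forall x y, 1 <= x <= k -> 1 <= y <= k -> x <> y -> l x <> l y)].

Definition canonical_nice_cycle (n m v : nat) (Om : witness_fun n m v)
  (tau : seq (mev n m v)) (k : nat) : Prop :=
  exists (u w : nat -> pos tau),
    cyc_distinct k u w /\
    (forall x, 1 <= x <= k ->
       Mrel tau x (u x) (w x) /\ Omega_e Om tau (oplus1 k x) (w x) (u (oplus1 k x))).
Arguments nice_cycle {n m v} Om tau k.
Arguments canonical_nice_cycle {n m v} Om tau k.

(* Main.v *)
Require Import Defs.
From mathcomp Require Import all_boot fingroup perm.
From mathcomp Require Import zify.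

Lemma perm_ext (T : finType) (s : seq (T * T)) :
  uniq (unzip1 s) -> uniq (unzip2 s) ->
  exists p : {perm T}, forall a b, (a, b) \in s -> p a = b.
Proof.
elim: s => [|[a0 b0] s IH] /=; first by exists 1%g.
move=> /andP[na0 u1] /andP[nb0 u2].
have [p Hp] := IH u1 u2.
exists (p * tperm (p a0) b0)%g => a b; rewrite in_cons => /orP[/eqP[-> ->]|H].
  by rewrite permM tpermL.
rewrite permM (Hp _ _ H) tpermD //.
  rewrite -(Hp _ _ H) (inj_eq perm_inj); apply/eqP => E; subst a0.
  by move: na0; rewrite (map_f (fun x => x.1) H).
apply/eqP => E; subst b0.
by move: nb0; rewrite (map_f (fun x => x.2) H).
Qed.

Lemma at_map (T U : Type) (f : T -> U) (s : seq T) (i : 'I_(size s)) :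
  @at_ U (map f s) (cast_ord (esym (size_map f s)) i) = f (at_ i).
Proof.
rewrite /at_ !(tnth_nth (f (tnth (in_tuple s) i))) /=.
rewrite (nth_map (tnth (in_tuple s) i)) //.
by congr f; rewrite [RHS](tnth_nth (tnth (in_tuple s) i)).

Qed.

Lemma oplus1_range k x : 1 <= x <= k -> 1 <= oplus1 k x <= k.
Proof. rewrite /oplus1; case: ifP; lia. Qed.

Lemma oplus1_inj k x y : 1 <= x <= k -> 1 <= y <= k -> oplus1 k x = oplus1 k y -> x = y.
Proof. rewrite /oplus1; case: ifP; case: ifP; lia. Qed.

Lemma uniq_size_card (T : finType) (s : seq T) : uniq s -> size s <= #|T|.
Proof. by move/card_uniqP <-; apply: max_card. Qed.

Theorem theorem7p5 (n m v : nat) (I : finType) (S : seq (mev n m v + I) -> Prop)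
  (Om : witness_fun n m v) (tau : seq (mev n m v)) (k : nat) :
  1 <= n -> 1 <= m -> 1 <= v ->
  regular S ->
  processor_symmetry S -> location_symmetry S ->
  is_witness S Om -> simple_witness S Om ->
  is_trace S tau -> unambiguous tau ->
  1 <= k ->
  nice_cycle Om tau k ->
  exists tau'' : seq (mev n m v),
    [/\ is_trace S tau'', unambiguous tau'' & canonical_nice_cycle Om tau'' k].
Proof.
move=> _ _ _ _ Hps Hls _ Hsimp Htr Hun k1 [u [w [p [l [Hd Hc Hp Hl]]]]].
have Hr : forall x, 1 <= x <= k -> x \in iota 1 k by move=> x hx; rewrite mem_iota; lia.
have Hr' : forall x, x \in iota 1 k -> 1 <= x <= k by move=> x; rewrite mem_iota; lia.
pose ep x := eproc (at_ (u x)).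
pose el x := eloc (at_ (w x)).
have ep_inj : {in iota 1 k &, injective ep}.
  move=> x y /Hr' hx /Hr' hy E.
  case: (eqVneq x y) => // /eqP nxy; exfalso; apply: (Hp x y hx hy nxy).
  have [[Px _] _] := Hc x hx; have [[Py _] _] := Hc y hy.
  move: Px Py; rewrite /Pset /proc; rewrite /ep in E; rewrite E => <- <- //.
have el_inj : {in iota 1 k &, injective el}.
  move=> x y /Hr' hx /Hr' hy E.
  case: (eqVneq x y) => // /eqP nxy; exfalso; apply: (Hl x y hx hy nxy).
  have [_ [Lx _]] := Hc x hx; have [_ [Ly _]] := Hc y hy.
  move: Lx Ly; rewrite /Lset /loc; rewrite /el in E; rewrite E => <- <- //.
have kn : k <= n.
  have := @uniq_size_card _ (map ep (iota 1 k)).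
  by rewrite size_map size_iota card_ord map_inj_in_uniq // iota_uniq; apply.
have km : k <= m.
  have := @uniq_size_card _ (map el (iota 1 k)).
  by rewrite size_map size_iota card_ord map_inj_in_uniq // iota_uniq; apply.
pose sl := [seq (ep x, insubd (ep 1) x.-1 : 'I_n) | x <- iota 1 k].
have U1 : uniq (unzip1 sl).
  by rewrite /unzip1 -map_comp map_inj_in_uniq ?iota_uniq.
have U2 : uniq (unzip2 sl).
  rewrite /unzip2 -map_comp map_inj_in_uniq ?iota_uniq //.
  move=> x y /Hr' hx /Hr' hy /= /(congr1 val); rewrite !val_insubd.
  have -> : x.-1 < n by lia.
  have -> : y.-1 < n by lia.
  lia.
have [lam Hlam] := @perm_ext _ _ U1 U2.
have vlam : forall x, 1 <= x <= k -> nat_of_ord (lam (eproc (at_ (u x)))) = x.-1.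
  move=> x hx; rewrite (Hlam (ep x) (insubd (ep 1) x.-1)).
    by rewrite val_insubd; have -> : x.-1 < n by lia.
  by apply/mapP; exists x => //; apply: Hr.
pose sm := [seq (el x, insubd (el 1) (oplus1 k x).-1 : 'I_m) | x <- iota 1 k].
have U3 : uniq (unzip1 sm).
  by rewrite /unzip1 -map_comp map_inj_in_uniq ?iota_uniq.
have U4 : uniq (unzip2 sm).
  rewrite /unzip2 -map_comp map_inj_in_uniq ?iota_uniq //.
  move=> x y /Hr' hx /Hr' hy /= /(congr1 val); rewrite !val_insubd.
  have := oplus1_range _ _ hx; have := oplus1_range _ _ hy => ry rx.
  have -> : (oplus1 k x).-1 < m by lia.
  have -> : (oplus1 k y).-1 < m by lia.
  move=> E; apply: (oplus1_inj _ _ _ hx hy); lia.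
have [mu Hmu] := @perm_ext _ _ U3 U4.
have vmu : forall x, 1 <= x <= k ->
    nat_of_ord (mu (eloc (at_ (w x)))) = (oplus1 k x).-1.
  move=> x hx; rewrite (Hmu (el x) (insubd (el 1) (oplus1 k x).-1)).
    rewrite val_insubd; have := oplus1_range _ _ hx => rx.
    by have -> : (oplus1 k x).-1 < m by lia.
  by apply/mapP; exists x => //; apply: Hr.
pose f (e : mev n m v) := perm_l mu (perm_p lam e).
have Htr'' : is_trace S (map f tau).
  have -> : map f tau = map (perm_l mu) (map (perm_p lam) tau) by rewrite -map_comp.
  by apply: Hls; apply: Hps.
pose C := cast_ord (esym (size_map f tau)).
have atC : forall i, at_ (C i) = f (at_ i) by move=> i; apply: at_map.
have Csurj : forall i'', exists i, i'' = C i.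
  by move=> i''; exists (cast_ord (size_map f tau) i''); rewrite /C cast_ordK.
have Cinj : forall i j, C i = C j -> i = j.
  by move=> i j /(congr1 val) /= E; apply: val_inj.
exists (map f tau); split => //.
- move=> j x'' [Lx Wx]; have [x ex] := Csurj x''; subst x''.
  move: Lx Wx; rewrite /Lset /op atC /= => Lx Wx.
  have [nz H] := Hun (loc (at_ x)) x (conj erefl Wx).
  split; first exact: nz.
  move=> y'' [Ly Wy] nyx; have [y ey] := Csurj y''; subst y''.
  move: Ly Wy; rewrite /Lset /op !atC /= => Ly Wy.
  apply: H; last by move=> E; apply: nyx; rewrite E.
  split => //; rewrite /Lset /loc.
  move: Ly; rewrite -Lx /loc /= => /eqP; rewrite eqSS => /eqP /val_inj /perm_inj.
  by move=> ->.
- exists (fun x => C (u x)), (fun x => C (w x)); split.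
    move: Hd => [H1 H2]; split.
      move=> x y hx hy nxy; have [a b] := H1 x y hx hy nxy.
      by split => E; [apply: a | apply: b]; apply: Cinj.
    by move=> x y hx hy E; apply: (H2 x y hx hy); apply: Cinj.
  move=> x hx; have [[Pu [Pw lt]] [Lw [Lu cl]]] := Hc x hx.
  have locf : forall z : pos tau, loc (at_ z) = l x -> loc (f (at_ z)) = oplus1 k x.
    move=> z Lz; rewrite /loc /=.
    have -> : eloc (at_ z) = eloc (at_ (w x)).
      by apply: ord_inj; move: Lz Lw; rewrite /Lset /loc; lia.
    rewrite vmu //; have := oplus1_range _ _ hx; lia.
  split.
    split; first by rewrite /Pset atC /proc /= vlam //; lia.
    split; last by [].
    rewrite /Pset atC /proc /=.
    have -> : eproc (at_ (w x)) = eproc (at_ (u x)).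
      by apply: ord_inj; move: Pu Pw; rewrite /Pset /proc; lia.
    rewrite vlam //; lia.
  split; first by rewrite /Lset atC locf.
  split; first by rewrite /Lset atC locf.
  case: cl => [[d [o1 o2]]|[d nz]|[a [b [La Lb Oab da db]]]].
  + by apply: Or31; rewrite !atC.
  + by apply: Or32; rewrite !atC.
  + apply: Or33; exists (C a), (C b).
    have La' : Lwset (map f tau) (oplus1 k x) (C a).
      by move: La => [La1 La2]; split; rewrite /Lset /op atC //; exact: locf.
    have Lb' : Lwset (map f tau) (oplus1 k x) (C b).
      by move: Lb => [Lb1 Lb2]; split; rewrite /Lset /op atC //; exact: locf.
    split => //; last by rewrite !atC.
    + apply/(Hsimp _ Htr''); split => //; split => //.
      by have [_ [_ ]] := (Hsimp _ Htr _ _ _).1 Oab.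
    + by rewrite !atC.
Qed.
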